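(* Let $K$ and $L$ be sets of positive integers, and suppose $(X,\mathcal{G},\mathcal{A})$ is a $(K,1)$-GDD with group sizes in $L$ such that (1) for every $k\in K$ there is a nested $(4,1)$-GDD of type $3^k$, and (2) for every $\ell\in L$ there is a nested $(3\ell+1,4,1)$-BIBD. Then there is a nested $(3|X|+1,4,1)$-BIBD.
   Context: A $(K,1)$-GDD with group sizes in $L$ is a triple $(X,\mathcal{G},\mathcal{A})$ where $\mathcal{G}$ is a partition of the point set $X$ into groups with $|G|\in L$ for all $G\in\mathcal{G}$, and $\mathcal{A}$ is a set of blocks with $|A|\in K$, each block meeting each group in at most one point, and every pair of points from different groups lying in exactly one block. A $(k,\lambda)$-GDD of type $t^u$ is such a structure with $tu$ points, $u$ groups of size $t$, all blocks of size $k$ (blocks forming a multiset) and every pair from different groups in exactly $\lambda$ blocks; a partial one has ''at most $\lambda$''. It is nested if there is $\phi:\mathcal{A}\to X$ with $(X,\mathcal{G},\{A\cup\{\phi(A)\}\})$ a partial $(k+1,\lambda+1)$-GDD of type $t^u$. A $(v,k,\lambda)$-BIBD is a set $X$ of $v$ points with a multiset $\mathcal{A}$ of $k$-subsets such that every pair of distinct points lies in exactly $\lambda$ blocks (partial: at most $\lambda$); it is nested if there is $\phi:\mathcal{A}\to X$ such that $\{A\cup\{\phi(A)\}:A\in\mathcal{A}\}$ is the block multiset of a partial $(v,k+1,\lambda+1)$-BIBD (in particular $\phi(A)\notin A$). *)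

(* Defs.v *)
From mathcomp Require Import all_boot.
Set Implicit Arguments. Unset Strict Implicit. Unset Printing Implicit Defensive.

Section Designs.
Variable T : finType.

Definition diff_groups (G : {set {set T}}) (x y : T) : Prop :=
  ~ (exists2 Gr, Gr \in G & (x \in Gr) && (y \in Gr)).

Definition meets_groups_once (G : {set {set T}}) (B : {set T}) : Prop :=
  forall Gr, Gr \in G -> #|B :&: Gr| <= 1.

Definition pair_count (bs : seq {set T}) (x y : T) : nat :=
  count (fun B : {set T} => (x \in B) && (y \in B)) bs.

Definition KGDD (K L : nat -> Prop) (G : {set {set T}}) (A : {set {set T}}) : Prop :=
  [/\ partition G [set: T],
      (forall Gr, Gr \in G -> L #|Gr|),
      (forall B, B \in A -> K #|B|),
      (forall B, B \in A -> meets_groups_once G B)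
    & (forall x y, diff_groups G x y ->
         #|[set B in A | (x \in B) && (y \in B)]| = 1)].

(* (k,lam)-GDD of type t^u (partial = true: "at most lam") ; blocks a multiset *)
Definition GDD_gen (partial : bool) (k lam t u : nat)
    (G : {set {set T}}) (bs : seq {set T}) : Prop :=
  [/\ [/\ #|T| = t * u, partition G [set: T], #|G| = u &
         (forall Gr, Gr \in G -> #|Gr| = t)],
      (forall B, B \in bs -> #|B| = k),
      (forall B, B \in bs -> meets_groups_once G B)
    & (forall x y, diff_groups G x y ->
         if partial then pair_count bs x y <= lam else pair_count bs x y == lam)].

(* the blocks A ∪ {phi(A)}, phi given as a list of points indexed like bs *)
Definition extend_blocks (bs : seq {set T}) (ps : seq T) : seq {set T} :=
  [seq p.2 |: p.1 | p <- zip bs ps].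

Definition nested_GDD (k lam t u : nat) (G : {set {set T}}) (bs : seq {set T}) : Prop :=
  GDD_gen false k lam t u G bs /\
  exists ps : seq T, size ps = size bs /\
    GDD_gen true k.+1 lam.+1 t u G (extend_blocks bs ps).

Definition BIBD_gen (partial : bool) (v k lam : nat) (bs : seq {set T}) : Prop :=
  [/\ #|T| = v,
      (forall B, B \in bs -> #|B| = k)
    & (forall x y, x != y ->
         if partial then pair_count bs x y <= lam else pair_count bs x y == lam)].

Definition nested_BIBD (v k lam : nat) (bs : seq {set T}) : Prop :=
  BIBD_gen false v k lam bs /\
  exists ps : seq T, size ps = size bs /\
    BIBD_gen true v k.+1 lam.+1 (extend_blocks bs ps).

End Designs.

(* Main.v *)
Require Import Defs.
From mathcomp Require Import all_boot.
From Stdlib Require Import ClassicalEpsilon Classical.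
Set Implicit Arguments. Unset Strict Implicit. Unset Printing Implicit Defensive.

Section Gen.
Variable U : finType.

Lemma pc0 (bs : seq {set U}) u v :
  (forall B, B \in bs -> ~~ ((u \in B) && (v \in B))) -> pair_count bs u v = 0.
Proof.
move=> H; rewrite /pair_count; apply/eqP; rewrite -leqn0 leqNgt -has_count.
by apply/hasPn.
Qed.

Lemma pc_cat (s1 s2 : seq {set U}) u v :
  pair_count (s1 ++ s2) u v = pair_count s1 u v + pair_count s2 u v.
Proof. by rewrite /pair_count count_cat. Qed.

Lemma pc_flatten (ss : seq (seq {set U})) u v :
  pair_count (flatten ss) u v = \sum_(s <- ss) pair_count s u v.
Proof.
elim: ss => [|s ss IH] /=; first by rewrite big_nil.
by rewrite big_cons pc_cat IH.
Qed.

Lemma ext_cat (b1 b2 : seq {set U}) p1 p2 : size b1 = size p1 ->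
  extend_blocks (b1 ++ b2) (p1 ++ p2) = extend_blocks b1 p1 ++ extend_blocks b2 p2.
Proof. by move=> h; rewrite /extend_blocks zip_cat // map_cat. Qed.

Lemma ext_flatten (cs : seq (seq {set U} * seq U)) :
  (forall c, c \in cs -> size c.1 = size c.2) ->
  extend_blocks (flatten (map fst cs)) (flatten (map snd cs)) =
  flatten [seq extend_blocks c.1 c.2 | c <- cs].
Proof.
elim: cs => [|c cs IH] H //=.
rewrite ext_cat ?IH // ?(H c) ?mem_head // => c' hc'.
by apply: H; rewrite inE hc' orbT.
Qed.

Lemma size_flatten_eq (cs : seq (seq {set U} * seq U)) :
  (forall c, c \in cs -> size c.1 = size c.2) ->
  size (flatten (map snd cs)) = size (flatten (map fst cs)).
Proof.
elim: cs => [|c cs IH] H //=.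
rewrite !size_cat IH ?(H c) ?mem_head // => c' hc'.
by apply: H; rewrite inE hc' orbT.
Qed.

End Gen.

Section Map.
Variables (T U : finType) (f : T -> U).
Hypothesis finj : injective f.

Definition mapb (bs : seq {set T}) : seq {set U} := [seq f @: B | B : {set T} <- bs].

Lemma pc_map (bs : seq {set T}) a b : pair_count (mapb bs) (f a) (f b) = pair_count bs a b.
Proof.
rewrite /pair_count /mapb count_map; apply: eq_count => B /=.
by rewrite !mem_imset.
Qed.

Lemma ext_map (bs : seq {set T}) ps : extend_blocks (mapb bs) (map f ps) = mapb (extend_blocks bs ps).
Proof.
rewrite /mapb /extend_blocks.
elim: bs ps => [|B bs IH] [|p ps] //=.
by rewrite IH imsetU1.
Qed.

Lemma mapb_card (bs : seq {set T}) B : (forall B, B \in bs -> #|B| = 4) -> B \in mapb bs -> #|B| = 4.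
Abort.
End Map.

Section Transf.
Variables (T U : finType) (R : {set T}) (S : {set U}) (u0 : U).
Definition transf (t : T) : U := nth u0 (enum S) (index t (enum R)).
Hypothesis hc : #|R| = #|S|.

Lemma transf_in t : t \in R -> transf t \in S.
Proof.
move=> ht; rewrite /transf -mem_enum; apply: mem_nth.
by rewrite -cardE -hc cardE index_mem mem_enum.
Qed.

Lemma transf_inj : {in R &, injective transf}.
Proof.
move=> t t' ht ht' /eqP; rewrite /transf nth_uniq ?enum_uniq //;
  try by rewrite -cardE -hc cardE index_mem mem_enum.
move/eqP=> e.
have e1 := nth_index t (s:=enum R); have e2 := nth_index t (s:=enum R).
rewrite -(e1 t) ?mem_enum // e e2 // mem_enum //.
Qed.

Lemma transf_onto u : u \in S -> exists2 t, t \in R & transf t = u.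
Proof.
move=> hu.
have sub : [set transf t | t in R] \subset S.
  by apply/subsetP => x /imsetP [t ht ->]; apply: transf_in.
have := subset_cardP _ sub.
rewrite card_in_imset; last exact: transf_inj.
move=> /(_ hc) e; move: hu; rewrite -e => /imsetP [t ht ->].
by exists t.
Qed.
End Transf.
Arguments transf_in [T U R S u0] hc [t].
Arguments transf_onto [T U R S u0] hc [u].

Definition cspec (U : finType) (w : U -> U -> bool) (c : seq {set U} * seq U) :=
 [/\ size c.2 = size c.1, (forall B, B \in c.1 -> #|B| = 4),
     (forall B, B \in extend_blocks c.1 c.2 -> #|B| = 5),
     (forall u v, u != v -> pair_count c.1 u v = w u v) &
     (forall u v, u != v -> pair_count (extend_blocks c.1 c.2) u v <= 2 * w u v)].

Lemma transport (T U : finType) (f : T -> U) (finj : injective f)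
  (bs : seq {set T}) (ps : seq T) (w : U -> U -> bool) :
  size ps = size bs -> (forall B, B \in bs -> #|B| = 4) ->
  (forall B, B \in extend_blocks bs ps -> #|B| = 5) ->
  (forall a b, f a != f b -> pair_count bs a b = w (f a) (f b)) ->
  (forall a b, f a != f b -> pair_count (extend_blocks bs ps) a b <= 2 * w (f a) (f b)) ->
  (forall u v, w u v -> u \in codom f /\ v \in codom f) ->
  cspec w (mapb f bs, map f ps).
Proof.
move=> hs h4 h5 hp he him; split => /=.
- by rewrite size_map hs /mapb size_map.
- by move=> B /mapP [B0 hB0 ->]; rewrite card_imset // h4.
- by rewrite ext_map // => B /mapP [B0 hB0 ->]; rewrite card_imset // h5.
- move=> u v huv.
  case: (boolP ((u \in codom f) && (v \in codom f))).
    by case/andP => /codomP [a ea] /codomP [b eb]; rewrite ea eb pc_map // hp // -ea -eb.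
  move=> hn; have -> : w u v = false.
    by apply/negP => /him [hu hv]; move: hn; rewrite hu hv.
  apply: pc0 => B /mapP [B0 _ ->]; apply/negP => /andP [/imsetP [a _ ea] /imsetP [b _ eb]].
  by move: hn; rewrite ea eb !codom_f.
- move=> u v huv; rewrite ext_map //.
  case: (boolP ((u \in codom f) && (v \in codom f))).
    by case/andP => /codomP [a ea] /codomP [b eb]; rewrite ea eb pc_map // he // -ea -eb.
  move=> hn; rewrite pc0 //.
  move=> B /mapP [B0 _ ->]; apply/negP => /andP [/imsetP [a _ ea] /imsetP [b _ eb]].
  by move: hn; rewrite ea eb !codom_f.
Qed.

Section Comps.
Variable X : finType.
Local Notation U := (option (X * 'I_3)).

Definition inS (Gr : {set X}) (u : U) : bool := if u is Some p then p.1 \in Gr else true.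
Definition SG (Gr : {set X}) : {set U} := [set u | inS Gr u].

Lemma card_SG (Gr : {set X}) : #|SG Gr| = 3 * #|Gr| + 1.
Proof.
have -> : SG Gr = None |: [set Some p | p in setX Gr [set: 'I_3]].
  apply/setP => [[[x i]|]]; rewrite !inE //=.
  apply/idP/imsetP => [hx|[p hp [e]]]; first by exists (x, i); rewrite // inE hx inE.
  by move: hp; rewrite -e inE => /andP [].
rewrite cardsU1 card_imset; last by move=> a b [].
rewrite cardsX cardsT card_ord.
have -> : (None \notin [set Some p | p in setX Gr [set: 'I_3]]) by apply/imsetP => [[p _]].
by rewrite mulnC addnC.
Qed.

Definition gcomp (Gr : {set X}) (p : {T : finType & (seq {set T} * seq T)%type}) : seq {set U} * seq U :=
  let f := transf [set: projT1 p] (SG Gr) None in (mapb f (projT2 p).1, map f (projT2 p).2).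

Lemma gcomp_spec (Gr : {set X}) (p : {T : finType & (seq {set T} * seq T)%type}) :
  size (projT2 p).2 = size (projT2 p).1 ->
  BIBD_gen false (3 * #|Gr| + 1) 4 1 (projT2 p).1 ->
  BIBD_gen true (3 * #|Gr| + 1) 5 2 (extend_blocks (projT2 p).1 (projT2 p).2) ->
  cspec (fun u v => inS Gr u && inS Gr v) (gcomp Gr p).
Proof.
case: p => T [bs ps] /= hs [c1 b1 p1] [c2 b2 p2].
rewrite /gcomp /=.
have hc : #|[set: T]| = #|SG Gr| by rewrite cardsT card_SG c1.
have finj : injective (transf [set: T] (SG Gr) None).
  by move=> a b; apply: (transf_inj hc); rewrite inE.
have hin : forall a, inS Gr (transf [set: T] (SG Gr) None a).
  by move=> a; have := transf_in (u0:=None) hc (in_setT a); rewrite /SG inE.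
apply: transport => //.
- move=> a b hab; rewrite !hin; apply/eqP; apply: p1.
  by apply: contraNneq hab => ->.
- move=> a b hab; rewrite !hin; apply: p2.
  by apply: contraNneq hab => ->.
- move=> u v /andP [hu hv]; split.
  + have hu' : u \in SG Gr by rewrite /SG inE.
    have [a _ <-] := transf_onto (u0:=None) hc hu'; exact: codom_f.
  + have hv' : v \in SG Gr by rewrite /SG inE.
    have [a _ <-] := transf_onto (u0:=None) hc hv'; exact: codom_f.
Qed.
End Comps.

Section BComps.
Variable X : finType.
Local Notation U := (option (X * 'I_3)).

Definition wB (B : {set X}) (u v : U) : bool :=
  match u, v with Some p, Some q => [&& p.1 \in B, q.1 \in B & p.1 != q.1] | _, _ => false end.

Definition hB (x0 : X) (B : {set X}) (T : finType) (GT : {set {set T}}) (t : T) : U :=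
  Some (transf GT B x0 (pblock GT t), transf (pblock GT t) [set: 'I_3] ord0 t).

Definition bcomp (x0 : X) (B : {set X})
  (q : {T : finType & ({set {set T}} * seq {set T} * seq T)%type}) : seq {set U} * seq U :=
  let f := hB x0 B (projT2 q).1.1 in (mapb f (projT2 q).1.2, map f (projT2 q).2).

Lemma bcomp_spec (x0 : X) (B : {set X})
  (q : {T : finType & ({set {set T}} * seq {set T} * seq T)%type}) :
  size (projT2 q).2 = size (projT2 q).1.2 ->
  GDD_gen false 4 1 3 #|B| (projT2 q).1.1 (projT2 q).1.2 ->
  GDD_gen true 5 2 3 #|B| (projT2 q).1.1 (extend_blocks (projT2 q).1.2 (projT2 q).2) ->
  cspec (wB B) (bcomp x0 B q).
Proof.
case: q => T [[GT bs] ps] /= hs [[cT hpart cG g3] b1 m1 p1] [_ b2 m2 p2].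
rewrite /bcomp /=.
have cov : cover GT = [set: T] by case/and3P: hpart => /eqP.
have triv : trivIset GT by case/and3P: hpart.
have pbm : forall t, pblock GT t \in GT by move=> t; rewrite pblock_mem // cov inE.
have tin : forall t, t \in pblock GT t by move=> t; rewrite mem_pblock cov inE.
have p3 : forall t, #|pblock GT t| = #|[set: 'I_3]|.
  by move=> t; rewrite cardsT card_ord g3.
have hcG : #|GT| = #|B| by rewrite cG.
have alinj : {in GT &, injective (transf GT B x0)} := transf_inj hcG.
have alB : forall t, transf GT B x0 (pblock GT t) \in B.
  by move=> t; apply: (transf_in hcG (pbm t)).
have finj : injective (hB x0 B GT).
  move=> a b [e1 e2].
  have ep : pblock GT a = pblock GT b := alinj _ _ (pbm a) (pbm b) e1.
  rewrite ep in e2; apply: (transf_inj (p3 b)) e2; last exact: tin.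
  by rewrite -ep tin.
have dg : forall a b, pblock GT a != pblock GT b -> diff_groups GT a b.
  move=> a b hne [Gr hGr /andP [ha hb]]; move/negP: hne; apply.
  by rewrite (def_pblock triv hGr ha) (def_pblock triv hGr hb).
have sg : forall (Bk : {set T}) a b, meets_groups_once GT Bk -> a != b ->
    pblock GT a = pblock GT b -> ~~ ((a \in Bk) && (b \in Bk)).
  move=> Bk a b hm hab ep; apply/negP => /andP [ha hb].
  have := hm _ (pbm a); apply/negP; rewrite -ltnNge.
  have : [set a; b] \subset Bk :&: pblock GT a.
    apply/subsetP => x; rewrite !inE => /orP [] /eqP ->; rewrite ?ha ?hb ?tin //.
    by rewrite ep tin.
  by move/subset_leq_card; rewrite cards2 hab.
have hw : forall a b, wB B (hB x0 B GT a) (hB x0 B GT b) = (pblock GT a != pblock GT b).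
  by move=> a b; rewrite /wB /hB /= !alB /= (inj_in_eq alinj) ?pbm.
have onto : forall x i, x \in B -> Some (x, i) \in codom (hB x0 B GT).
  move=> x i hx.
  have [P hP eP] := transf_onto (u0:=x0) hcG hx.
  have c3 : #|P| = #|[set: 'I_3]| by rewrite cardsT card_ord g3.
  have [t ht et] := transf_onto (u0:=ord0) c3 (in_setT i).
  have pt : pblock GT t = P := def_pblock triv hP ht.
  by apply/codomP; exists t; rewrite /hB pt eP et.
apply: transport => //.
- move=> a b hab; have hab' : a != b by apply: contraNneq hab => ->.
  rewrite hw; case: (eqVneq (pblock GT a) (pblock GT b)) => ep /=.
  + by apply: pc0 => Bk hBk; exact: sg (m1 _ hBk) hab' ep.
  + by apply/eqP; exact: p1 _ _ (dg _ _ ep).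
- move=> a b hab; have hab' : a != b by apply: contraNneq hab => ->.
  rewrite hw; case: (eqVneq (pblock GT a) (pblock GT b)) => ep /=.
  + by rewrite pc0 // => Bk hBk; exact: sg (m2 _ hBk) hab' ep.
  + exact: p2 _ _ (dg _ _ ep).
- move=> [[x i]|] [[y j]|] //= /and3P [hx hy _].
  by split; apply: onto.
Qed.
End BComps.

Lemma sumw (X : finType) (K L : nat -> Prop) (G A : {set {set X}}) :
  KGDD K L G A -> forall u v : option (X * 'I_3), u != v ->
  \sum_(Gr in G) (inS Gr u && inS Gr v : nat) + \sum_(B in A) (wB B u v : nat) = 1.
Proof.
case=> hpart _ _ hm hpc.
have cov : cover G = [set: X] by case/and3P: hpart => /eqP.
have triv : trivIset G by case/and3P: hpart.
have pbm : forall t, pblock G t \in G by move=> t; rewrite pblock_mem // cov inE.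
have tin : forall t, t \in pblock G t by move=> t; rewrite mem_pblock cov inE.
have one : forall x, \sum_(Gr in G) (x \in Gr : nat) = 1.
  move=> x; rewrite (bigD1 (pblock G x)) //= tin big1 // => Gr /andP [hG hne].
  apply/eqP; rewrite eqb0; apply/negP => hx; move/eqP: hne; apply.
  by rewrite (def_pblock triv hG hx).
move=> [[x i]|] [[y j]|] // huv.
- case: (boolP [exists Gr in G, (x \in Gr) && (y \in Gr)]).
  + case/existsP => Gr /andP [hG /andP [hx hy]].
    rewrite [X in _ + X]big1 ?addn0.
      rewrite (bigD1 Gr) //= hx hy big1 // => Gr' /andP [hG' hne].
      apply/eqP; rewrite eqb0; apply/negP => /andP [hx' _]; move/eqP: hne; apply.
      by rewrite -(def_pblock triv hG' hx') (def_pblock triv hG hx).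
    move=> B hB /=; apply/eqP; rewrite eqb0; apply/negP => /and3P [hxB hyB hxy].
    have := hm _ hB _ hG; apply/negP; rewrite -ltnNge.
    have : [set x; y] \subset B :&: Gr.
      by apply/subsetP => z; rewrite !inE => /orP [] /eqP ->; rewrite ?hxB ?hyB ?hx ?hy.
    by move/subset_leq_card; rewrite cards2 hxy.
  + move=> hn.
    have dg : diff_groups G x y.
      by move=> [Gr hG hxy]; move/negP: hn; apply; apply/existsP; exists Gr; rewrite hG.
    have hxy : x != y.
      by apply/eqP => exy; move/negP: hn; apply; apply/existsP; exists (pblock G x); rewrite pbm -exy tin.
    rewrite big1 ?add0n; last first.
      move=> Gr hG /=; apply/eqP; rewrite eqb0; apply/negP => hxy'.
      by move/negP: hn; apply; apply/existsP; exists Gr; rewrite hG.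
    rewrite -[RHS](hpc x y dg) -sum1dep_card big_mkcondr /=.
    by apply: eq_bigr => B _; rewrite hxy andbT; case: ((x \in B) && (y \in B)).
- rewrite [X in _ + X]big1 ?addn0 // -[RHS](one x).
  by apply: eq_bigr => Gr _ /=; rewrite andbT.
- rewrite [X in _ + X]big1 ?addn0 // -[RHS](one y).
  by apply: eq_bigr => Gr _ /=.
Qed.

Theorem mainTheorem8 (K L : nat -> Prop)
  (hK : forall k, K k -> 0 < k) (hL : forall l, L l -> 0 < l)
  (X : finType) (G : {set {set X}}) (A : {set {set X}}) :
  KGDD K L G A ->
  (forall k, K k -> exists (T : finType) (GT : {set {set T}}) (bs : seq {set T}),
       nested_GDD 4 1 3 k GT bs) ->
  (forall l, L l -> exists (T : finType) (bs : seq {set T}),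
       nested_BIBD (3 * l + 1) 4 1 bs) ->
  exists (T : finType) (bs : seq {set T}), nested_BIBD (3 * #|X| + 1) 4 1 bs.
Proof.
move=> hKG hKd hLd.
case: (pickP (@predT X)) => [x0 _ | hX0]; last first.
  have c0 : #|X| = 0 by apply: eq_card0 => x; exact: hX0.
  exists unit, [::]; rewrite c0; split.
    by split => //; rewrite ?card_unit //; move=> [] [].
  by exists [::]; split => //; split => //; rewrite ?card_unit //; move=> [] [].
have HL : forall l, exists p : {T : finType & (seq {set T} * seq T)%type},
    L l -> [/\ size (projT2 p).2 = size (projT2 p).1,
              BIBD_gen false (3 * l + 1) 4 1 (projT2 p).1 &
              BIBD_gen true (3 * l + 1) 5 2 (extend_blocks (projT2 p).1 (projT2 p).2)].
  move=> l; case: (classic (L l)) => hl.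
    have [T [bs [hb [ps [hs he]]]]] := hLd l hl.
    by exists (existT (fun T : finType => (seq {set T} * seq T)%type) T (bs, ps)).
  by exists (existT (fun T : finType => (seq {set T} * seq T)%type) unit ([::], [::])).
have HK : forall k, exists q : {T : finType & ({set {set T}} * seq {set T} * seq T)%type},
    K k -> [/\ size (projT2 q).2 = size (projT2 q).1.2,
              GDD_gen false 4 1 3 k (projT2 q).1.1 (projT2 q).1.2 &
              GDD_gen true 5 2 3 k (projT2 q).1.1 (extend_blocks (projT2 q).1.2 (projT2 q).2)].
  move=> k; case: (classic (K k)) => hk.
    have [T [GT [bs [hb [ps [hs he]]]]]] := hKd k hk.
    by exists (existT (fun T : finType => ({set {set T}} * seq {set T} * seq T)%type) T (GT, bs, ps)).
  by exists (existT (fun T : finType => ({set {set T}} * seq {set T} * seq T)%type) unit (set0, [::], [::])).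
pose FL l := proj1_sig (constructive_indefinite_description _ (HL l)).
have HFL : forall l, L l -> _ := fun l => proj2_sig (constructive_indefinite_description _ (HL l)).
pose FK k := proj1_sig (constructive_indefinite_description _ (HK k)).
have HFK : forall k, K k -> _ := fun k => proj2_sig (constructive_indefinite_description _ (HK k)).
have gsp : forall Gr, Gr \in G -> cspec (fun u v => inS Gr u && inS Gr v) (gcomp Gr (FL #|Gr|)).
  move=> Gr hG; case: hKG => _ hLG _ _ _.
  by have [h1 h2 h3] := HFL _ (hLG _ hG); apply: gcomp_spec.
have bsp : forall B, B \in A -> cspec (wB B) (bcomp x0 B (FK #|B|)).
  move=> B hB; case: hKG => _ _ hKB _ _.
  by have [h1 h2 h3] := HFK _ (hKB _ hB); apply: bcomp_spec.
pose cs := [seq gcomp Gr (FL #|Gr|) | Gr <- enum G] ++ [seq bcomp x0 B (FK #|B|) | B <- enum A].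
have csp : forall c, c \in cs -> exists w, cspec w c.
  move=> c; rewrite mem_cat => /orP [] /mapP [Z hZ ->]; rewrite mem_enum in hZ.
    by eexists; apply: gsp.
  by eexists; apply: bsp.
have cU : #|{: option (X * 'I_3)}| = 3 * #|X| + 1.
  by rewrite card_option card_prod card_ord mulnC addn1.
have hsz : forall c, c \in cs -> size c.1 = size c.2.
  by move=> c /csp [w [h _ _ _ _]].
exists (option (X * 'I_3)), (flatten (map fst cs)); split.
  split => //.
    move=> B /flattenP [s /mapP [c hc ->] hB].
    by have [w [_ h _ _ _]] := csp c hc; apply: h.
  move=> u v huv; rewrite pc_flatten big_map big_cat !big_map /=.
  rewrite (eq_big_seq (fun Gr => (inS Gr u && inS Gr v : nat))); last first.
    by move=> Gr; rewrite mem_enum => hG; have [_ _ _ h _] := gsp Gr hG; apply: h.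
  rewrite [X in _ + X](eq_big_seq (fun B => (wB B u v : nat))); last first.
    by move=> B; rewrite mem_enum => hB; have [_ _ _ h _] := bsp B hB; apply: h.
  by rewrite !big_enum /= (sumw hKG huv).
exists (flatten (map snd cs)); split; first exact: size_flatten_eq.
split => //; rewrite ext_flatten //.
  move=> B /flattenP [s /mapP [c hc ->] hB].
  by have [w [_ _ h _ _]] := csp c hc; apply: h.
move=> u v huv; rewrite pc_flatten big_map big_cat !big_map /=.
apply: (@leq_trans (2 * (\sum_(Gr in G) (inS Gr u && inS Gr v : nat) + \sum_(B in A) (wB B u v : nat)))); last by rewrite (sumw hKG huv).
rewrite mulnDr -!big_enum !big_distrr /=.
apply: leq_add; rewrite big_seq [X in _ <= X]big_seq; apply: leq_sum.
  by move=> Gr; rewrite mem_enum => hG; have [_ _ _ _ h] := gsp Gr hG; apply: h.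
by move=> B; rewrite mem_enum => hB; have [_ _ _ _ h] := bsp B hB; apply: h.
Qed.
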